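(* Let $x_1,\dots,x_n$ be indeterminates, $R=\mathbb R[x_1,\dots,x_n]$, and $f_1,\dots,f_n\in R$. Let $g_1,\dots,g_n$ be the (unique) elements of the fraction field of $R$ such that $\mathfrak p(x)=\sum_{i=1}^n g_i x^{i-1}$ satisfies $\mathfrak p(x_j)=f_j$ for $j=1,\dots,n$. Then all $g_i$ lie in $R$ if and only if $x_i-x_j$ divides $f_i-f_j$ in $R$ for all $i\neq j$. *)

(* Defs.v *)
From HB Require Import structures.
From mathcomp Require Import all_boot all_order all_algebra.
From mathcomp Require Import reals.
From mathcomp Require Import mpoly.
Set Implicit Arguments. Unset Strict Implicit. Unset Printing Implicit Defensive.
Import Order.TTheory GRing.Theory Num.Theory.
Local Open Scope ring_scope.

(* The polynomial ring R = RR[x_1,...,x_n]; variables x_{i+1} = 'X_i, i : 'I_n. *)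
Notation polyR R n := {mpoly R[n]}.
Notation fracR R n := {fraction {mpoly R[n]}}.

(* g (indexed by i : 'I_n, g i standing for g_{i+1}) is the coefficient vector
   of p(x) = sum_i g_{i} x^{i-1} with p(x_j) = f_j for all j,
   computed in the fraction field of R. *)
Definition interpolates (R : realType) (n : nat)
  (f : 'I_n -> {mpoly R[n]}) (g : 'I_n -> {fraction {mpoly R[n]}}) : Prop :=
  forall j : 'I_n, \sum_(i < n) g i * (tofrac ('X_j : {mpoly R[n]})) ^+ i = tofrac (f j).

Definition mdvd (R : realType) (n : nat) (a b : {mpoly R[n]}) : Prop :=
  exists q : {mpoly R[n]}, b = q * a.

(* Main.v *)
Require Import Defs.
From HB Require Import structures.
From mathcomp Require Import all_boot all_order all_algebra.
From mathcomp Require Import reals.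
From mathcomp Require Import mpoly.
Set Implicit Arguments. Unset Strict Implicit. Unset Printing Implicit Defensive.
Import Order.TTheory GRing.Theory Num.Theory.
Local Open Scope ring_scope.

From Stdlib Require Import FunctionalExtensionality.
Definition dv (A : comNzRingType) (d x : A) : Prop := exists q, x = q * d.

Lemma interp_gen (A : comNzRingType) (P : A -> Prop)
  (Hstep : forall ya yb yc Fa Fb Fc qa qb : A, P ya -> P yb -> P yc ->
     ya != yb -> yb != yc -> ya != yc -> dv (ya - yb) (Fa - Fb) ->
     Fa - Fc = qa * (ya - yc) -> Fb - Fc = qb * (yb - yc) -> dv (ya - yb) (qa - qb))
  (s : seq (A * A)) :
  uniq (map fst s) -> (forall u, u \in s -> P u.1) ->
  (forall u v, u \in s -> v \in s -> u.1 != v.1 -> dv (u.1 - v.1) (u.2 - v.2)) ->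
  exists p : {poly A}, (size p <= size s)%N /\ forall u, u \in s -> p.[u.1] = u.2.
Proof.
move Hk: (size s) => k; elim: k s Hk => [|k IH] [|[yc Fc] s] //= Hk.
  by move=> _ _ _; exists 0; rewrite size_poly0.
case: Hk => Hk.
case/andP=> ycn us HP Hdv.
have ins : forall u, u \in s -> u \in (yc, Fc) :: s by move=> u; rewrite in_cons orbC => ->.
have hq : forall u : A * A, exists q, (u \in s) ==> (u.2 - Fc == q * (u.1 - yc)).
  move=> u; case: (boolP (u \in s)) => us'; last by exists 0.
  have neq : u.1 != yc.
    by apply/eqP=> e; move: ycn; rewrite -e (map_f fst us').
  have [q Hq] := Hdv u (yc, Fc) (ins _ us') (mem_head _ _) neq.
  by exists q; rewrite Hq eqxx.
pose qf u := xchoose (hq u).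
have qfP : forall u, u \in s -> u.2 - Fc = qf u * (u.1 - yc).
  by move=> u us'; have := xchooseP (hq u); move=> /implyP /(_ us') /eqP.
pose s' := map (fun u => (u.1, qf u)) s.
have ms' : map fst s' = map fst s by rewrite -map_comp.
have [p' [szp' Hp']] : exists p : {poly A}, (size p <= k)%N /\
    forall u, u \in s' -> p.[u.1] = u.2.
  apply: (IH s'); first by rewrite size_map.
    by rewrite ms'.
    move=> u /mapP [v vs ->] /=; exact: (HP v (ins _ vs)).
  move=> u' v' /mapP [u us' ->] /mapP [v vs ->] /= neq.
  have nuc : u.1 != yc by apply/eqP=> e; move: ycn; rewrite -e (map_f fst us').
  have nvc : v.1 != yc by apply/eqP=> e; move: ycn; rewrite -e (map_f fst vs).
  apply: (Hstep u.1 v.1 yc u.2 v.2 Fc) => //.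
  - exact: (HP u (ins _ us')).
  - exact: (HP v (ins _ vs)).
  - exact: (HP _ (mem_head _ _)).
  - exact: (Hdv u v (ins _ us') (ins _ vs) neq).
  - exact: qfP.
  - exact: qfP.
exists (Fc%:P + ('X - yc%:P) * p'); split.
  apply: leq_trans (size_add _ _) _; rewrite geq_max size_polyC.
  apply/andP; split; first by case: (Fc != 0).
  apply: leq_trans (size_mul_leq _ _) _; rewrite size_XsubC /=.
  by [].
move=> u; rewrite in_cons => /orP [/eqP -> | us'] /=.
  by rewrite !hornerE subrr mul0r addr0.
rewrite !hornerE.
have -> : p'.[u.1] = qf u by rewrite (Hp' (u.1, qf u)) // (map_f _ us').
by rewrite mulrC -qfP // addrC subrK.
Qed.

Lemma dv_sum (A : comNzRingType) (d : A) (I : Type) (r : seq I) (F : I -> A) :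
  (forall i, dv d (F i)) -> dv d (\sum_(i <- r) F i).
Proof.
move=> H; apply: (big_ind (fun x => dv d x)).
- by exists 0; rewrite mul0r.
- by move=> x y [a ->] [b ->]; exists (a + b); rewrite mulrDl.
- by move=> i _; apply: H.
Qed.

Lemma dv_XX (A : comNzRingType) (x y : A) k : dv (x - y) (x ^+ k - y ^+ k).
Proof. by rewrite subrXX; eexists; rewrite mulrC. Qed.

Section MP.
Variables (R : realType) (n : nat).
Local Notation P := {mpoly R[n]}.

Lemma comp_congr (d : P) (lq lq' : n.-tuple P) (p : P) :
  (forall i, dv d (tnth lq i - tnth lq' i)) -> dv d ((p \mPo lq) - (p \mPo lq')).
Proof.
move=> H; rewrite (comp_mpolyEX p lq) (comp_mpolyEX p lq').
apply: (big_ind2 (fun x y => dv d (x - y))).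
- by exists 0; rewrite subrr mul0r.
- move=> x1 x2 y1 y2 [a Ha] [b Hb]; exists (a + b).
  by rewrite opprD addrACA Ha Hb mulrDl.
move=> m _; rewrite !comp_mpolyX -scalerBr.
suff [q ->] : dv d (\prod_(i < n) tnth lq i ^+ m i - \prod_(i < n) tnth lq' i ^+ m i).
  by exists (p@_m *: q); rewrite scalerAl.
apply: (big_ind2 (fun x y => dv d (x - y))).
- by exists 0; rewrite subrr mul0r.
- move=> x1 x2 y1 y2 [a Ha] [b Hb]; exists (x1 * b + a * y2).
  have -> : x1 * y1 - x2 * y2 = x1 * (y1 - y2) + (x1 - x2) * y2.
    by rewrite mulrBr mulrBl addrA subrK.
  by rewrite Ha Hb mulrDl !mulrA [a * d * y2]mulrAC.
move=> i _; have [a Ha] := H i; have [b Hb] := dv_XX (tnth lq i) (tnth lq' i) (m i).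
by exists (b * a); rewrite Hb Ha mulrA.
Qed.

Lemma Xinj (i j : 'I_n) : ('X_i : P) = 'X_j -> i = j.
Proof.
move=> e; have h : ('X_i : P)@_U_(i) = (i == i)%:R := mcoeffXU _ i i.
move: h; rewrite e mcoeffXU eqxx.
by case: eqP => // _ /eqP; rewrite eq_sym oner_eq0.
Qed.

Definition subt (a b : 'I_n) : n.-tuple P :=
  [tuple (if i == b then 'X_a else 'X_i) | i < n].

Lemma subtX a b i : ('X_i : P) \mPo subt a b = if i == b then 'X_a else 'X_i.
Proof. by rewrite comp_mpolyXU -tnth_nth tnth_mktuple. Qed.

Lemma subt_dv a b (p : P) : dv ('X_b - 'X_a) (p - (p \mPo subt a b)).
Proof.
rewrite -{1}[p]comp_mpoly_id; apply: comp_congr => i.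
rewrite !tnth_mktuple; case: eqP => [->|_].
  by exists 1; rewrite mul1r.
by exists 0; rewrite subrr mul0r.
Qed.

Lemma sgB a b (x y : P) : (x - y) \mPo subt a b = (x \mPo subt a b) - (y \mPo subt a b).
Proof. exact: comp_mpolyB. Qed.
Lemma sgM a b (x y : P) : (x * y) \mPo subt a b = (x \mPo subt a b) * (y \mPo subt a b).
Proof. exact: (rmorphM (comp_mpoly (subt a b))). Qed.

Lemma hstep_mpoly (ya yb yc Fa Fb Fc qa qb : P) :
  (exists i, ya = 'X_i) -> (exists i, yb = 'X_i) -> (exists i, yc = 'X_i) ->
  ya != yb -> yb != yc -> ya != yc -> dv (ya - yb) (Fa - Fb) ->
  Fa - Fc = qa * (ya - yc) -> Fb - Fc = qb * (yb - yc) -> dv (ya - yb) (qa - qb).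
Proof.
move=> [a ->] [b ->] [c ->] nab nbc nac [k Hk] Ea Eb.
have anb : a != b by apply: contraNneq nab => ->.
have cnb : c != b by apply: contraNneq nbc => ->.
have Ea' := congr1 (comp_mpoly (subt a b)) Ea.
have Eb' := congr1 (comp_mpoly (subt a b)) Eb.
have Hk' := congr1 (comp_mpoly (subt a b)) Hk.
rewrite /= !sgB !sgM !sgB !subtX (negbTE anb) (negbTE cnb) eqxx in Ea' Eb' Hk'.
rewrite subrr mulr0 in Hk'.
pose sg := comp_mpoly (subt a b).
have e : sg qa = sg qb.
  apply/eqP; rewrite -subr_eq0.
  have : (sg qa - sg qb) * ('X_a - 'X_c) == 0.
    rewrite mulrBl /sg -Ea' -Eb' opprB addrA subrK; exact/eqP.
  by rewrite mulf_eq0 !subr_eq0 (negbTE nac) orbF.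
have [q Hq] := subt_dv a b (qa - qb).
exists (- q); rewrite mulNr -mulrN opprB.
by move: Hq; rewrite rmorphB /= -/sg e subrr subr0.
Qed.

End MP.

Theorem proposition3p2 (R : realType) (n : nat) (f : 'I_n -> {mpoly R[n]}) :
  (exists g, interpolates f g) /\
  (forall g g', interpolates f g -> interpolates f g' -> g = g') /\
  (forall g, interpolates f g ->
    ((forall i : 'I_n, exists h : {mpoly R[n]}, g i = tofrac h) <->
     (forall i j : 'I_n, i != j -> mdvd ('X_i - 'X_j) (f i - f j)))).
Proof.
pose K := {fraction {mpoly R[n]}}.
pose y (j : 'I_n) : K := tofrac ('X_j : {mpoly R[n]}).
have yinj : injective y.
  by move=> i j /eqP; rewrite /y tofrac_eq => /eqP /Xinj.
have uniq_g : forall g g', interpolates f g -> interpolates f g' -> g = g'.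
  move=> g g' Hg Hg'; apply: functional_extensionality => i.
  pose E (k : nat) : K := oapp (fun i => g i - g' i) 0 (insub k).
  have EE : forall i : 'I_n, E i = g i - g' i by move=> i'; rewrite /E valK.
  pose d := \poly_(k < n) E k.
  have droot : forall j, d.[y j] = 0.
    move=> j; rewrite horner_poly.
    under eq_bigr do rewrite EE mulrBl.
    by rewrite sumrB Hg Hg' subrr.
  have d0 : d = 0.
    apply/eqP; apply/negPn/negP => dn0.
    have := max_poly_roots dn0 (rs := map y (enum 'I_n)).
    rewrite map_inj_uniq ?enum_uniq // size_map size_enum_ord.
    have -> : all (root d) (map y (enum 'I_n)).
      by apply/allP => z /mapP [j _ ->]; apply/eqP; apply: droot.
    move=> /(_ isT isT); rewrite ltnNge size_poly.
    by [].
  apply/eqP; rewrite -subr_eq0 -EE.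
  have := congr1 (fun q : {poly K} => q`_i) d0.
  by rewrite /= coef_poly ltn_ord coef0 => ->.
split.
  pose s := [seq (y i, tofrac (f i)) | i <- enum 'I_n].
  have hK : forall ya yb yc Fa Fb Fc qa qb : K, True -> True -> True ->
     ya != yb -> yb != yc -> ya != yc -> dv (ya - yb) (Fa - Fb) ->
     Fa - Fc = qa * (ya - yc) -> Fb - Fc = qb * (yb - yc) -> dv (ya - yb) (qa - qb).
    move=> ya yb yc Fa Fb Fc qa qb _ _ _ nab _ _ _ _ _.
    by exists ((qa - qb) / (ya - yb)); rewrite divfK // subr_eq0.
  have Hu : uniq (map fst s) by rewrite -map_comp map_inj_uniq ?enum_uniq.
  have Hd : forall u v, u \in s -> v \in s -> u.1 != v.1 -> dv (u.1 - v.1) (u.2 - v.2).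
    move=> u v _ _ neq; exists ((u.2 - v.2) / (u.1 - v.1)).
    by rewrite divfK // subr_eq0.
  have [p [szp Hp]] := interp_gen hK Hu (fun _ _ => I) Hd.
  exists (fun i => p`_i) => j.
  rewrite size_map size_enum_ord in szp.
  rewrite -(horner_coef_wide _ szp).
  by apply: (Hp (y j, tofrac (f j))); apply/mapP; exists j; rewrite ?mem_enum.
split; first exact: uniq_g.
move=> g Hg; split.
  move=> H.
  have H' : forall i, exists h : {mpoly R[n]}, g i == tofrac h.
    by move=> i; have [h ->] := H i; exists h.
  pose h i := xchoose (H' i).
  have gh : forall i, g i = tofrac (h i) by move=> i; apply/eqP; apply: (xchooseP (H' i)).
  have fE : forall j, f j = \sum_(i < n) h i * 'X_j ^+ i.
    move=> j; apply/eqP; rewrite -tofrac_eq -Hg rmorph_sum /=.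
    by apply/eqP/eq_bigr => i _; rewrite rmorphM rmorphXn /= gh.
  move=> i j _; rewrite /mdvd !fE -sumrB.
  apply: dv_sum => k; rewrite -mulrBr.
  have [q ->] := dv_XX ('X_i : {mpoly R[n]}) 'X_j k.
  by exists (h k * q); rewrite mulrA.
move=> Hdiv.
pose s := [seq (('X_i : {mpoly R[n]}), f i) | i <- enum 'I_n].
have Xi : injective (fun i : 'I_n => ('X_i : {mpoly R[n]})) by move=> i j /Xinj.
have Hu : uniq (map fst s) by rewrite -map_comp map_inj_uniq ?enum_uniq.
have HP : forall u, u \in s -> exists i, u.1 = 'X_i.
  by move=> u /mapP [i _ ->]; exists i.
have Hd : forall u v, u \in s -> v \in s -> u.1 != v.1 -> dv (u.1 - v.1) (u.2 - v.2).
  move=> u v /mapP [i _ ->] /mapP [j _ ->] /= neq.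
  apply: Hdiv; apply: contraNneq neq => ->; by [].
have [p [szp Hp]] := interp_gen (@hstep_mpoly R n) Hu HP Hd.
rewrite size_map size_enum_ord in szp.
have Hg' : interpolates f (fun i => tofrac p`_i).
  move=> j; have := Hp ('X_j, f j); rewrite /= => <-; last by apply/mapP; exists j; rewrite ?mem_enum.
  rewrite (horner_coef_wide _ szp) rmorph_sum /=.
  by apply/eq_bigr => i _; rewrite rmorphM rmorphXn.
rewrite (uniq_g _ _ Hg Hg') => i; by exists p`_i.
Qed.
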